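(* In the setting described in the context, for any $\boldsymbol{c}=(c_1,c_2)\in\mathbb{Z}_+^2$ with $\boldsymbol{c}\neq\mathbf{0}$, for every $(\boldsymbol{x},j)\in\mathbb{S}_+$, $j'\in S_0$ and $l_1,l_2\in\mathbb{Z}_+$, $$\limsup_{k\to\infty}\frac1k\log\tilde q_{(\boldsymbol{x},j),(kc_1+l_1,kc_2+l_2,j')}\le-\sup_{\boldsymbol{\theta}\in\mathcal{D}_{\boldsymbol{x}}}\langle\boldsymbol{\theta},\boldsymbol{c}\rangle .$$
   Context: Let $S_0=\{1,\dots,s_0\}$ be a finite set. The process $\{\boldsymbol{Y}_n\}=\{(X_{1,n},X_{2,n},J_n)\}$ is a discrete-time Markov chain on $\mathbb{S}=\mathbb{Z}^2\times S_0$ with space-homogeneous skip-free transitions: there are nonnegative $s_0\times s_0$ matrices $A_{k,l}$, $k,l\in\{-1,0,1\}$, with $\sum_{k,l}A_{k,l}$ stochastic, such that $\mathbb{P}(\boldsymbol{Y}_{n+1}=(x_1+k,x_2+l,j')\mid\boldsymbol{Y}_n=(x_1,x_2,j))=[A_{k,l}]_{j,j'}$ (all other transitions have probability $0$). Let $\mathbb{Z}_+$ be the nonnegative integers, $\mathbb{S}_+=\mathbb{Z}_+^2\times S_0$, $\tau=\inf\{n\ge0:\boldsymbol{Y}_n\notin\mathbb{S}_+\}$, and $\tilde q_{\boldsymbol{y},\boldsymbol{y}'}=\mathbb{E}\big(\sum_{n=0}^{\tau-1}1(\boldsymbol{Y}_n=\boldsymbol{y}')\mid\boldsymbol{Y}_0=\boldsymbol{y}\big)$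 for $\boldsymbol{y},\boldsymbol{y}'\in\mathbb{S}_+$. Let $A_{*,*}=\sum_{k,l}A_{k,l}$ with stationary distribution $\boldsymbol\pi_{*,*}$, $A_{i,*}=\sum_kA_{i,k}$, $A_{*,j}=\sum_kA_{k,j}$, $a_1=\boldsymbol{\pi}_{*,*}(A_{1,*}-A_{-1,*})\mathbf{1}$, $a_2=\boldsymbol{\pi}_{*,*}(A_{*,1}-A_{*,-1})\mathbf{1}$. Standing assumptions: $\{\boldsymbol{Y}_n\}$ is irreducible and aperiodic, and $a_1<0$ or $a_2<0$. For $\boldsymbol{x},\boldsymbol{x}'\in\mathbb{Z}_+^2$ let $N_{\boldsymbol{x},\boldsymbol{x}'}=(\tilde q_{(\boldsymbol{x},j),(\boldsymbol{x}',j')};j,j'\in S_0)$ and $\Phi_{\boldsymbol{x}}(\theta_1,\theta_2)=\sum_{k_1,k_2\ge0}e^{k_1\theta_1+k_2\theta_2}N_{\boldsymbol{x},(k_1,k_2)}$; $\mathcal{D}_{\boldsymbol{x}}$ is the interior of $\{(\theta_1,\theta_2)\in\mathbb{R}^2:\Phi_{\boldsymbol{x}}(\theta_1,\theta_2)<\infty \text{ elementwise}\}$. $\langle\cdot,\cdot\rangle$ is the Euclidean inner product. *)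

(* Defs.v *)
From HB Require Import structures.
From mathcomp Require Import all_boot all_order all_algebra.
From mathcomp Require Import all_classical all_reals all_analysis.
Set Implicit Arguments. Unset Strict Implicit. Unset Printing Implicit Defensive.
Import Order.TTheory GRing.Theory Num.Theory.
Import numFieldNormedType.Exports.
Local Open Scope classical_set_scope.
Local Open Scope ring_scope.

Section MarkovModulatedRW.
Variable R : realType.
Variable s0 : nat.
(* A i j is the matrix A_{i-1, j-1}, i.e. index 0 <-> -1, 1 <-> 0, 2 <-> +1. *)
Variable A : 'I_3 -> 'I_3 -> 'M[R]_s0.

Definition state := ((int * int) * 'I_s0)%type.

Definition shift (i : 'I_3) : int := (i%:Z - 1)%R.
Definition Im1 : 'I_3 := ord0.
Definition Ip1 : 'I_3 := ord_max.

Definition move (y : state) (i k : 'I_3) (m : 'I_s0) : state :=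
  ((y.1.1 + shift i, y.1.2 + shift k)%R, m).

Fixpoint pn (n : nat) (y y' : state) : R :=
  match n with
  | 0 => (y == y')%:R
  | n.+1 => \sum_(i < 3) \sum_(k < 3) \sum_(m < s0)
              A i k y.2 m * pn n (move y i k m) y'
  end.

Definition inSp (y : state) : bool := (0 <= y.1.1)%R && (0 <= y.1.2)%R.

(* taboo probabilities P(Y_n = y', tau > n | Y_0 = y):
   all of Y_0, ..., Y_n lie in S_+ *)
Fixpoint qn (n : nat) (y y' : state) : R :=
  match n with
  | 0 => (inSp y)%:R * (y == y')%:R
  | n.+1 => (inSp y)%:R * \sum_(i < 3) \sum_(k < 3) \sum_(m < s0)
              A i k y.2 m * qn n (move y i k m) y'
  end.

(* \tilde q_{y,y'} = E(sum_{n < tau} 1(Y_n = y') | Y_0 = y)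
                   = sum_n P(Y_n = y', tau > n | Y_0 = y)  *)
Definition qtilde (y y' : state) : \bar R :=
  (\sum_(0 <= n <oo) (qn n y y')%:E)%E.

Definition irreducible : Prop :=
  forall y y' : state, exists n, 0 < pn n y y'.

Definition aperiodic : Prop :=
  forall (y : state) (d : nat),
    (forall n, (0 < n)%N -> 0 < pn n y y -> (d %| n)%N) -> d = 1%N.

Definition Astar : 'M[R]_s0 := \sum_(i < 3) \sum_(k < 3) A i k.
Definition Arow (i : 'I_3) : 'M[R]_s0 := \sum_(k < 3) A i k.
Definition Acol (k : 'I_3) : 'M[R]_s0 := \sum_(i < 3) A i k.

Definition stationary_distr (pi : 'rV[R]_s0) : Prop :=
  (forall j, 0 <= pi ord0 j) /\ \sum_j pi ord0 j = 1 /\ pi *m Astar = pi.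

Definition drift (pi : 'rV[R]_s0) (M : 'M[R]_s0) : R :=
  \sum_(j < s0) \sum_(j' < s0) pi ord0 j * M j j'.

Definition a1 (pi : 'rV[R]_s0) : R := drift pi (Arow Ip1 - Arow Im1).
Definition a2 (pi : 'rV[R]_s0) : R := drift pi (Acol Ip1 - Acol Im1).

Definition sp_state (x : nat * nat) (j : 'I_s0) : state :=
  ((x.1%:Z, x.2%:Z), j).

Definition Phi_finite (x : nat * nat) (theta : R * R) : Prop :=
  forall j j' : 'I_s0,
    (\esum_(k in [set: nat * nat])
       ((expR (k.1%:R * theta.1 + k.2%:R * theta.2))%:E
         * qtilde (sp_state x j) (sp_state k j')) < +oo)%E.

Definition Dom (x : nat * nat) : set (R * R) :=
  interior [set theta | Phi_finite x theta].

End MarkovModulatedRW.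

(* Main.v *)
Require Import Defs.
From HB Require Import structures.
From mathcomp Require Import all_boot all_order all_algebra.
From mathcomp Require Import all_classical all_reals all_analysis.
From mathcomp Require Import ring.
Import Order.TTheory GRing.Theory Num.Theory.
Import numFieldNormedType.Exports.
Local Open Scope classical_set_scope.
Local Open Scope ring_scope.

Lemma wcvg (R : realType) (C t : R) :
  (fun k : nat => (k%:R^-1 * C - t)) @ \oo --> - t.
Proof.
rewrite -(cvg_shiftS (fun k : nat => (k%:R^-1 * C - t))) /=.
have H1 := cvgMr_tmp (b:=C) (@cvg_harmonic R); specialize (H1 _).
have H2 := cvgB H1 (cvg_cst (F:=\oo) t).
rewrite mul0r sub0r in H2.
exact: H2.
Qed.
Lemma lne_bound (R : realType) (Q M : \bar R) (s : R) :
  ((expR s)%:E * Q <= M -> M < +oo ->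
  lne Q <= (ln (Num.max (fine M) 1) - s)%:E)%E.
Proof.
Local Open Scope ereal_scope.
move=> hQ hM.
case: Q hQ => [r| |] hQ; last 2 first.
- by move: hQ; rewrite mulry gtr0_sg ?expR_gt0 // mul1e leye_eq => /eqP Mi; rewrite Mi in hM.
- by rewrite leNye.
have [r0|r0] := leP r 0%R.
  by rewrite le0_lneNy ?lee_fin // leNye.
rewrite lne_EFin // lee_fin.
case: M hQ hM => [m| |] hQ hM //.
move: hQ; rewrite -EFinM lee_fin /= => hQ.
have hmx : (0 < Num.max m 1)%R by rewrite lt_max ltr01 orbT.
rewrite lerBrDr -ler_expR expRD lnK ?posrE // lnK ?posrE //.
rewrite mulrC (le_trans hQ) // le_max lexx //.
Qed.

Lemma esups_le (R : realType) (u v : (\bar R)^nat) :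
  (forall k, (0 < k)%N -> u k <= v k)%E ->
  (limn_esup u <= limn_esup v)%E.
Proof.
Local Open Scope ereal_scope.
move=> uv; rewrite !limn_esup_lim; apply: lee_lim.
- exact: is_cvg_esups.
- exact: is_cvg_esups.
exists 1%N => // n /= n1.
apply: ge_ereal_sup => _ [k /= nk <-].
apply: (@le_trans _ _ (v k)); first by apply: uv; exact: leq_trans nk.
by apply: ereal_sup_ubound; exists k.
Qed.

Local Close Scope ereal_scope.
Theorem proposition2p4 (R : realType) (s0 : nat)
  (A : 'I_3 -> 'I_3 -> 'M[R]_s0) (pi : 'rV[R]_s0) :
  (0 < s0)%N ->
  (forall i k a b, 0 <= A i k a b) ->
  (forall a, \sum_b Astar A a b = 1) ->
  irreducible A -> aperiodic A ->
  stationary_distr A pi ->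
  (a1 A pi < 0 \/ a2 A pi < 0) ->
  forall c1 c2 : nat, (c1, c2) != (0%N, 0%N) ->
  forall (x : nat * nat) (j j' : 'I_s0) (l1 l2 : nat),
  (limn_esup (fun k : nat =>
       (k%:R^-1)%:E *
       lne (qtilde A (sp_state x j) (sp_state (k * c1 + l1, k * c2 + l2)%N j')))
   <= - ereal_sup [set (theta.1 * c1%:R + theta.2 * c2%:R)%:E
                   | theta in Dom A x])%E.
Proof.
move=> _ _ _ _ _ _ _ c1 c2 _ x j j' l1 l2.
set u := (fun k : nat => _).
rewrite leeNr; apply: ge_ereal_sup => _ [th hth <-].
have hP : Phi_finite A x th by exact: interior_subset hth.
rewrite leeNr.
have hM := hP j j'.
set M := (\esum_(k in _) _)%E in hM.
set t := th.1 * c1%:R + th.2 * c2%:R.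
set C := ln (Num.max (fine M) 1) - (l1%:R * th.1 + l2%:R * th.2).
have uv : forall k, (0 < k)%N -> (u k <= ((k%:R^-1 * C - t)%:E))%E.
  move=> k k0.
  set p := (k * c1 + l1, k * c2 + l2)%N.
  have hterm : ((expR (p.1%:R * th.1 + p.2%:R * th.2))%:E
         * qtilde A (sp_state x j) (sp_state p j') <= M)%E.
    apply: esum_ge; exists [set p]; first by split; [exact: finite_set1|].
    by rewrite fsbig_set1.
  have hl := @lne_bound _ _ _ _ hterm hM.
  rewrite /u; apply: (@le_trans _ _ ((k%:R^-1)%:E * (ln (Num.max (fine M) 1) - (p.1%:R * th.1 + p.2%:R * th.2))%:E))%E.
    by apply: lee_wpmul2l; rewrite // lee_fin invr_ge0 ler0n.
  rewrite -EFinM lee_fin le_eqVlt; apply/orP; left; apply/eqP.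
  rewrite /C /t /p /= !natrD !natrM.
  have k0' : (k%:R : R) != 0 by rewrite pnatr_eq0 -lt0n.
  by field.
apply: (le_trans (esups_le _ _ _ uv)).
rewrite (cvg_limn_einf_sup (_ : _ @ \oo --> (- t)%:E)).2 //.
apply: cvg_EFin; first exact: nearW.
exact: wcvg.
Qed.
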